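(* In the setting below, every chain $Z$ in $\tilde H$ is a simple path, i.e. no vertex of $H$ appears on $Z$ more than once.
   Context: Setting: $G$ is a graph; $S_1,T_1,S_2,T_2\subseteq V(G)$ are pairwise disjoint sets of $k$ vertices each, all of degree $1$ in $G$, with $(S_1,T_1)$ and $(S_2,T_2)$ each routable in $G$ (connected by $k$ node-disjoint paths). $H$ is an $(S_1,T_1,S_2,T_2)$-minimal minor of $G$: a minor of $G$ containing the vertices of $S_1\cup T_1\cup S_2\cup T_2$ as vertices (each with singleton branch set), in which both pairs are routable, and such that deleting or contracting any edge of $H$ destroys one of these properties. $\mathcal{R}$ (red paths) is a set of $k$ node-disjoint paths routing $(S_1,T_1)$ in $H$, and $\mathcal{B}$ (blue paths) is a set of $k$ node-disjoint paths routing $(S_2,T_2)$ in $H$. $\tilde H$ is the directed graph on $V(H)$ whose edges are the edges of red paths directed from $S_1$ toward $T_1$ (red edges) and the edges of blue paths directed from $S_2$ toward $T_2$ (blue edges). A chain is a directed (not necessarily simple) walk $e_1,e_2,\dots,e_r$ in $\tilde H$ whose edges alternate in color (all odd-indexed edges red and all even-indexed blue, or vice versa). *)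

(* Defs.v *)
(* Simple graphs on finite types: a graph is a vertex set
   V : {set T} together with a symmetric irreflexive relation e : rel T
   (only edges between vertices of V matter). *)
From mathcomp Require Import all_boot.
Set Implicit Arguments. Unset Strict Implicit. Unset Printing Implicit Defensive.

Section Graphs.
Variable T : finType.

Definition sym_irrefl (e : rel T) : Prop :=
  (forall x y, e x y = e y x) /\ (forall x, e x x = false).

Definition degree (V : {set T}) (e : rel T) (x : T) : nat :=
  #|[set y in V | e x y]|.

Definition gpath (V : {set T}) (e : rel T) (p : seq T) : bool :=
  if p is x :: q then [&& path e x q, uniq p & all (fun z => z \in V) p]
  else false.

Definition first_v (p : seq T) : option T := ohead p.
Definition last_v (p : seq T) : option T :=
  if p is x :: q then Some (last x q) else None.

Definition linkage (V : {set T}) (e : rel T) (k : nat) (S Tt : {set T})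
    (P : seq (seq T)) : Prop :=
  [/\ size P = k,
      (forall p, p \in P ->
         [/\ gpath V e p,
             (exists2 s, first_v p = Some s & s \in S) &
             (exists2 t, last_v p = Some t & t \in Tt)]) &
      pairwise (fun p q : seq T => [disjoint p & q]) P].

Definition routable (V : {set T}) (e : rel T) (k : nat) (S Tt : {set T}) : Prop :=
  exists P, linkage V e k S Tt P.

Definition del_edge (e : rel T) (u v : T) : rel T :=
  fun x y => e x y && ~~ (((x == u) && (y == v)) || ((x == v) && (y == u))).

(* contraction of the edge uv: v is merged into u; vertex set becomes V :\ v *)
Definition contr_edge (e : rel T) (u v : T) : rel T :=
  fun x y => [&& x != v, y != v, x != y &
                 [|| e x y, (x == u) && e v y | (y == u) && e x v]].

(* (VH,eH) is a minor of (TG,eG) with model phi (each vertex x of H is a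
   representative of its branch set phi x): branch sets contain their
   representative, are connected in G, pairwise disjoint, and every edge of H
   is realised by an edge of G between the branch sets. *)
Definition minor_model (eG : rel T) (VH : {set T}) (eH : rel T)
    (phi : T -> {set T}) : Prop :=
  [/\ (forall x, x \in VH -> x \in phi x),
      (forall x, x \in VH -> forall a b, a \in phi x -> b \in phi x ->
          connect (fun c d => [&& eG c d, c \in phi x & d \in phi x]) a b),
      (forall x y, x \in VH -> y \in VH -> x != y -> [disjoint phi x & phi y]) &
      (forall x y, x \in VH -> y \in VH -> eH x y ->
          exists a b, [/\ a \in phi x, b \in phi y & eG a b])].

(* directed coloured edges of H~ : red (c = true) from the red paths,
   blue (c = false) from the blue paths, oriented along the path sequences *)
Definition path_edge (P : seq (seq T)) (x y : T) : bool :=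
  has (fun p => (x, y) \in zip p (behead p)) P.

Definition col_edge (R B : seq (seq T)) (c : bool) (x y : T) : bool :=
  if c then path_edge R x y else path_edge B x y.

(* the walk with vertex sequence x :: xs (edges e_1..e_r, r = size xs) is a
   chain whose first edge has colour c and colours alternate *)
Definition chain (R B : seq (seq T)) (c : bool) (x : T) (xs : seq T) : Prop :=
  forall i, i < size xs ->
    col_edge R B (addb c (odd i)) (nth x (x :: xs) i) (nth x xs i).

End Graphs.

(* Main.v *)
Require Import Defs.
From mathcomp Require Import all_boot zify.
Set Implicit Arguments. Unset Strict Implicit. Unset Printing Implicit Defensive.


Section Basic.
Variable T : finType.
Implicit Types (p q : seq T) (x y : T).

Lemma zipb_nth x0 p x y : (x, y) \in zip p (behead p) ->
  exists i, [/\ i.+1 < size p, nth x0 p i = x & nth x0 p i.+1 = y].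
Proof.
move/(nthP (x0,x0)) => [i Hi]; rewrite nth_zip_cond Hi => -[<- <-].
exists i; rewrite nth_behead; split => //.
move: Hi; rewrite size_zip size_behead; case: (size p) => // n.
by rewrite /= minnE subKn ?leqnSn.
Qed.

Lemma nth_zipb x0 p i : i.+1 < size p ->
  (nth x0 p i, nth x0 p i.+1) \in zip p (behead p).
Proof.
move=> Hi; have Hz : i < size (zip p (behead p)).
  rewrite size_zip size_behead; move: Hi; case: (size p) => // n.
  by rewrite /= minnE subKn ?leqnSn.
by have := mem_nth (x0,x0) Hz; rewrite nth_zip_cond Hz /= nth_behead.
Qed.
End Basic.

Section Link.
Variables (T : finType) (V : {set T}) (e : rel T) (k : nat) (S Tt : {set T})
  (P : seq (seq T)).
Hypothesis hL : linkage V e k S Tt P.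
Implicit Types (p q : seq T) (x y : T).

Lemma L_gpath p : p \in P -> gpath V e p.
Proof. by case: hL => _ H _ /H []. Qed.

Lemma L_uniq p : p \in P -> uniq p.
Proof. by move/L_gpath; case: p => // x q /and3P[]. Qed.

Lemma L_inV p x : p \in P -> x \in p -> x \in V.
Proof. by move/L_gpath; case: p => // a q /and3P[_ _ /allP H] /H. Qed.

Lemma L_edge p i a : p \in P -> i.+1 < size p -> e (nth a p i) (nth a p i.+1).
Proof.
move/L_gpath; case: p => // b q /and3P[/(pathP a) H _ _] Hi.
exact: H.
Qed.

Lemma L_ne p : p \in P -> p != [::].
Proof. by move/L_gpath; case: p. Qed.

Lemma L_head p a : p \in P -> head a p \in S.
Proof.
case: hL => _ H _ /H [] _ [s]; case: p => //= x q [->] //.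
Qed.

Lemma L_last p a : p \in P -> last a p \in Tt.
Proof.
case: hL => _ H _ /H [] _ _ [t]; case: p => //= x q [->] //.
Qed.

Lemma L_same p q x : p \in P -> q \in P -> x \in p -> x \in q -> p = q.
Proof.
case: hL => _ _ /(pairwiseP [::]) Hpw Hp Hq xp xq.
move: Hp Hq xp xq => /(nthP [::]) [i Hi <-] /(nthP [::]) [j Hj <-] xp xq.
case: (ltngtP i j) => [ij|ji|-> //].
- by have /disjointFr := Hpw i j Hi Hj ij; move/(_ x xp); rewrite xq.
- by have /disjointFr := Hpw j i Hj Hi ji; move/(_ x xq); rewrite xp.
Qed.

Lemma pe_nth x y a : path_edge P x y ->
  exists2 p, p \in P & exists i, [/\ i.+1 < size p, nth a p i = x & nth a p i.+1 = y].
Proof. by move/hasP => [p Hp /(zipb_nth a)] H; exists p. Qed.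

Lemma nth_pe p i a : p \in P -> i.+1 < size p -> path_edge P (nth a p i) (nth a p i.+1).
Proof. by move=> Hp Hi; apply/hasP; exists p => //; apply: nth_zipb. Qed.

Lemma F_edge x y : path_edge P x y -> [&& e x y, x \in V & y \in V].
Proof.
move=> H; have [p Hp [i [Hi Hx Hy]]] := pe_nth x H.
have h1 := L_edge x Hp Hi.
have h2 : nth x p i \in p by rewrite mem_nth // ltnW.
have h3 : nth x p i.+1 \in p by rewrite mem_nth.
rewrite Hx Hy in h1 h2 h3.
by rewrite h1 (L_inV Hp h2) (L_inV Hp h3).
Qed.

Lemma idx_eq p i j a : p \in P -> i < size p -> j < size p ->
  nth a p i = nth a p j -> i = j.
Proof. by move=> Hp Hi Hj /eqP; rewrite nth_uniq ?L_uniq // => /eqP. Qed.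

Lemma F_out x y y' : path_edge P x y -> path_edge P x y' -> y = y'.
Proof.
move=> H1 H2; have [p Hp [i [Hi Hx Hy]]] := pe_nth x H1.
have [p' Hp' [i' [Hi' Hx' Hy']]] := pe_nth x H2.
have xp : x \in p by rewrite -Hx mem_nth // ltnW.
have xp' : x \in p' by rewrite -Hx' mem_nth // ltnW.
have ep := L_same Hp Hp' xp xp'; subst p'.
have ii : i = i'.
  by apply: (idx_eq (a:=x) Hp); [exact: ltnW | exact: ltnW | rewrite Hx Hx'].
by rewrite -Hy -Hy' ii.
Qed.

Lemma F_in x x' y : path_edge P x y -> path_edge P x' y -> x = x'.
Proof.
move=> H1 H2; have [p Hp [i [Hi Hx Hy]]] := pe_nth x H1.
have [p' Hp' [i' [Hi' Hx' Hy']]] := pe_nth x H2.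
have yp : y \in p by rewrite -Hy mem_nth.
have yp' : y \in p' by rewrite -Hy' mem_nth.
have ep := L_same Hp Hp' yp yp'; subst p'.
have ii : i.+1 = i'.+1 by apply: (idx_eq (a:=x) Hp) => //; rewrite Hy Hy'.
by case: ii => ii; rewrite -Hx -Hx' ii.
Qed.

Lemma F_2cyc x y : path_edge P x y -> path_edge P y x -> False.
Proof.
move=> H1 H2; have [p Hp [i [Hi Hx Hy]]] := pe_nth x H1.
have [p' Hp' [i' [Hi' Hx' Hy']]] := pe_nth x H2.
have yp : y \in p by rewrite -Hy mem_nth.
have yp' : y \in p' by rewrite -Hx' mem_nth // ltnW.
have ep := L_same Hp Hp' yp yp'; subst p'.
have h1 : i = i'.+1.
  by apply: (idx_eq (a:=x) Hp) => //; [exact: ltnW | rewrite Hx Hy'].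
have h2 : i.+1 = i'.
  by apply: (idx_eq (a:=x) Hp) => //; [exact: ltnW | rewrite Hy Hx'].
by move: h2; rewrite h1 => /eqP; rewrite -addn2 -{2}(addn0 i') eqn_add2l.
Qed.

Lemma F_cont x y : path_edge P y x -> x \notin Tt -> exists z, path_edge P x z.
Proof.
move/(pe_nth x) => [p Hp [i [Hi Hy Hx]]] xT.
case: (ltnP i.+2 (size p)) => Hs.
  by exists (nth x p i.+2); have := @nth_pe p i.+1 x Hp Hs; rewrite Hx.
have Hsz : size p = i.+2 by apply/eqP; rewrite eqn_leq Hs Hi.
have h : x = last x p by rewrite -(nth_last x) Hsz /= Hx.
by move: xT; rewrite h (L_last x Hp).
Qed.

Lemma F_src p x a : p \in P -> path_edge P x (head a p) -> False.
Proof.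
move=> Hp /(pe_nth a) [p' Hp' [i [Hi Hx Hy]]].
have hp : p != [::] := L_ne Hp.
have h1 : head a p \in p' by rewrite -Hy mem_nth.
have h2 : head a p \in p by case: p hp {Hp Hy h1} => //= b q _; rewrite mem_head.
have ep := L_same Hp' Hp h1 h2.
subst p'.
have h0 : 0 < size p by case: (p) hp.
have : i.+1 = 0.
  by apply: (idx_eq (a:=a) Hp) => //; rewrite Hy; case: (p).
by [].
Qed.

Hypothesis hST : [disjoint S & Tt].

Lemma F_srcout p a : p \in P -> exists z, path_edge P (head a p) z.
Proof.
move=> Hp; have hs := L_head a Hp; have ht := L_last a Hp.
case: p Hp hs ht => [/L_ne//|b [|c q]] Hp /= hs ht.
  by have := disjointFr hST hs; rewrite ht.
by exists c; apply/hasP; exists [:: b, c & q] => //=; rewrite mem_head.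
Qed.

Lemma F_heads a : uniq (map (head a) P).
Proof.
have uP : uniq P.
  apply/negPn/negP => /(uniqPn [::]) [i [j [ij jP eq]]].
  case: hL => _ _ /(pairwiseP [::]) Hpw.
  have := Hpw i j (ltn_trans ij jP) jP ij; rewrite eq.
  have := L_ne (mem_nth [::] jP); case: (nth [::] P j) => //= b q _.
  by move=> hd; have := disjointFr hd (mem_head b q); rewrite mem_head.
rewrite map_inj_in_uniq // => p q Hp Hq hh.
apply: (L_same Hp Hq (x := head a p)).
  by have := L_ne Hp; case: p {Hp hh} => //= b q' _; rewrite mem_head.
by rewrite hh; have := L_ne Hq; case: q {Hq hh} => //= b q' _; rewrite mem_head.
Qed.

Hypothesis esym : forall x y, e x y = e y x.

Lemma L_term p x : p \in P -> x \in p ->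
  (forall y z, e x y -> e x z -> y = z) -> x \in S :|: Tt.
Proof.
move=> Hp xp Hdeg; have hu := L_uniq Hp.
set i := index x p; have Hi : i < size p by rewrite index_mem.
have Hx : nth x p i = x by rewrite nth_index.
case: i Hi Hx => [|i] Hi Hx.
  have h : x = head x p by rewrite -{1}Hx; case: (p).
  by rewrite inE h (L_head x Hp).
case: (ltnP i.+2 (size p)) => Hs.
  have e1 := L_edge x Hp (ltnW Hs); have e2 := L_edge x Hp Hs.
  rewrite Hx esym in e1; rewrite Hx in e2.
  have hi : i < size p by apply: ltn_trans Hi; apply: ltnSn.
  have neq : nth x p i != nth x p i.+2.
    by rewrite (nth_uniq x hi Hs hu) ltn_eqF // ltnW.
  by rewrite (Hdeg _ _ e1 e2) eqxx in neq.
have Hsz : size p = i.+2 by apply/eqP; rewrite eqn_leq Hs Hi.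
have h : x = last x p by rewrite -(nth_last x) Hsz /= Hx.
by rewrite inE h (L_last x Hp) orbT.
Qed.

End Link.


Section Contr.
Variable T : finType.
Implicit Types (p q l r : seq T) (x y u v : T).

Lemma gpathE (V : {set T}) e p :
  gpath V e p = [&& p != [::], sorted e p, uniq p & all (fun z => z \in V) p].
Proof. by case: p. Qed.

Lemma gpath_rev (V : {set T}) e p : (forall x y, e x y = e y x) ->
  gpath V e (rev p) = gpath V e p.
Proof.
move=> es; rewrite !gpathE rev_uniq all_rev rev_sorted.
have -> : (rev p != [::]) = (p != [::]) by case: p => // x q; rewrite rev_cons; case: (rev q).
by rewrite (@eq_sorted _ _ e) // => x y; rewrite es.
Qed.

Lemma contr_sym e u v : (forall x y, e x y = e y x) ->
  forall x y, contr_edge e u v x y = contr_edge e u v y x.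
Proof.
move=> es x y; rewrite /contr_edge [y == x]eq_sym (es y x) (es v x) (es y v).
by case: (x != v); case: (y != v); case: (x != y) => //=; case: (e x y) => //=;
  rewrite orbC.
Qed.

Lemma contr_sub e u v x y : (forall x, e x x = false) -> x != v -> y != v ->
  e x y -> contr_edge e u v x y.
Proof.
move=> ei xv yv exy; rewrite /contr_edge xv yv exy /= andbT.
by apply/eqP => xy; rewrite xy ei in exy.
Qed.

Lemma gpath_contr0 (V : {set T}) e u v p : (forall x, e x x = false) ->
  gpath V e p -> v \notin p -> gpath (V :\ v) (contr_edge e u v) p.
Proof.
move=> ei; rewrite !gpathE => /and4P[-> so -> al] vp /=.
have hP : all (predC1 v) p.
  by apply/allP => z zp /=; apply/eqP => zv; rewrite -zv zp in vp.
rewrite (sub_in_sorted (P := predC1 v) (e := e)) //=.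
  apply/allP => z zp; rewrite !inE (allP al z zp) andbT.
  by apply/eqP => zv; rewrite -zv zp in vp.
by move=> a b /= av bv; apply: contr_sub.
Qed.

Lemma gpath_contr1 (V : {set T}) e u v l r :
  (forall x, e x x = false) ->
  gpath V e (l ++ u :: v :: r) ->
  gpath (V :\ v) (contr_edge e u v) (filter (predC1 v) (l ++ u :: v :: r)).
Proof.
move=> ei g.
have hu : uniq (l ++ u :: v :: r) by move: g; rewrite gpathE => /and4P[].
move: (hu); rewrite cat_uniq => /and3P[ul /hasPn hl /= /andP[uvr /andP[vr ru]]].
have uv : u != v by move: uvr; rewrite inE negb_or => /andP[].
have ur : u \notin r by move: uvr; rewrite inE negb_or => /andP[].
have vl : v \notin l by apply: hl; rewrite !inE eqxx orbT.
have ul' : u \notin l by apply: hl; rewrite !inE eqxx.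
have fl : filter (predC1 v) l = l.
  by apply/all_filterP/allP => z zl /=; apply/eqP => zv; rewrite -zv zl in vl.
have fr : filter (predC1 v) r = r.
  by apply/all_filterP/allP => z zl /=; apply/eqP => zv; rewrite -zv zl in vr.
have fu := filter_uniq (predC1 v) hu.
rewrite filter_cat /= uv eqxx /= fl fr in fu *.
move: g; rewrite !gpathE fu => /and4P[_ so _ al].
have al' : all (fun z => z \in V) (l ++ u :: r).
  by move: al; rewrite !all_cat /= => /and3P[-> -> /andP[_ ->]].
apply/and3P; split; first by case: (l).
- move: so; rewrite !sorted_cat_cons => /andP[s1 s2].
  apply/andP; split.
    apply: (sub_in_sorted (P := predC1 v) (e := e) _ _ s1).
      by move=> a b /= av bv; apply: contr_sub.
    rewrite all_rcons /= uv /=; apply/allP => z zl /=.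
    by apply/eqP => zv; rewrite -zv zl in vl.
  move: vr ur s2; clear hu uvr ru al al' fu hl fr.
  case: r => //= c r' /norP[vc vr'] /norP[uc ur'] /and3P[euv evc pr'].
  apply/andP; split.
    rewrite /contr_edge; apply/and4P; split => //; first by rewrite eq_sym.
    by apply/or3P; constructor 2; rewrite eqxx evc.
  apply: (sub_in_path (P := predC1 v) (e := e) _ _ pr').
    by move=> a b /= av bv; apply: contr_sub.
  apply/allP => z; rewrite inE => /orP[/eqP->|zl] /=; first by rewrite eq_sym.
  by apply/eqP => zv; apply: (negP vr'); move: zl; rewrite zv.
- apply/allP => z; rewrite mem_cat inE => /or3P[] zz.
  + rewrite !inE (allP al' z) ?mem_cat ?zz // andbT.
    by apply/eqP => zv; rewrite -zv zz in vl.
  + by rewrite (eqP zz) !inE uv (allP al' u) // mem_cat inE eqxx orbT.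
  + rewrite !inE (allP al' z) ?mem_cat ?inE ?zz ?orbT // andbT.
    by apply/eqP => zv; rewrite -zv zz in vr.
Qed.

End Contr.


Section Contr2.
Variable T : finType.
Implicit Types (p q l r : seq T) (x y u v : T).

Lemma decomp2 p i a : i.+1 < size p ->
  p = take i p ++ nth a p i :: nth a p i.+1 :: drop i.+2 p.
Proof.
move=> Hi; rewrite -(drop_nth a Hi) -(drop_nth a) ?cat_take_drop //.
by apply: ltn_trans Hi.
Qed.

Lemma last_v_rcons s x : last_v (rcons s x) = Some x.
Proof. by case: s => //= y s; rewrite last_rcons. Qed.

Lemma L_contr (V : {set T}) e k (S Tt : {set T}) P u v :
  linkage V e k S Tt P ->
  (forall x y, e x y = e y x) -> (forall x, e x x = false) ->
  path_edge P u v || path_edge P v u -> v \notin S -> v \notin Tt ->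
  linkage (V :\ v) (contr_edge e u v) k S Tt (map (filter (predC1 v)) P).
Proof.
move=> hL es ei huv vS vT.
have [p0 Hp0 [i [Hi Ha Hb]]] : exists2 p, p \in P & exists i,
   [/\ i.+1 < size p, (nth u p i == u) && (nth u p i.+1 == v) ||
                      (nth u p i == v) && (nth u p i.+1 == u) & true].
  case/orP: huv => /(pe_nth u) [p Hp [i [Hi Hx Hy]]]; exists p => //; exists i;
  by rewrite Hx Hy !eqxx ?orbT.
have vp0 : v \in p0.
  case/orP: Ha => /andP[/eqP h1 /eqP h2]; [rewrite -h2 | rewrite -h1]; rewrite mem_nth //.
  exact: ltnW.
case: (hL) => Hsz Hp Hpw; split.
- by rewrite size_map.
- move=> q /mapP [p Hpp ->].
  have [g [s hs fs] [t ht lt]] := Hp p Hpp.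
  split.
  + case: (boolP (v \in p)) => vp; last by rewrite (all_filterP _) ?gpath_contr0 //;
      apply/allP => z zp /=; apply/eqP => zv; rewrite -zv zp in vp.
    have ep := L_same hL Hpp Hp0 vp vp0; subst p0.
    case/orP: Ha => /andP[/eqP h1 /eqP h2].
    * by rewrite (decomp2 u Hi) h1 h2; apply: gpath_contr1 => //;
        rewrite -h1 -h2 -decomp2.
    * have ep : p = take i p ++ v :: u :: drop i.+2 p by rewrite {1}(decomp2 u Hi) h1 h2.
      have er : rev p = rev (drop i.+2 p) ++ u :: v :: rev (take i p).
        by rewrite {1}ep rev_cat !rev_cons -!cats1 -!catA.
      have g1 : gpath V e (rev (drop i.+2 p) ++ u :: v :: rev (take i p)).
        by rewrite -er gpath_rev.
      have g2 := gpath_contr1 ei g1.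
      by rewrite -er filter_rev gpath_rev in g2 => //; apply: contr_sym.
  + case: p g hs {ht Hpp} => //= a p' _ [es0]; subst s; case: ifP => av /=.
      by exists a.
    by move: av => /negbFE /eqP av; rewrite -av fs in vS.
  + case/lastP: p g ht {hs Hpp} => // p' a _; rewrite last_v_rcons => -[et]; subst t.
    rewrite filter_rcons /=; case: ifP => av; first by exists a; rewrite ?last_v_rcons.
    by move: av => /negbFE /eqP av; rewrite -av lt in vT.
- rewrite pairwise_map; apply: sub_pairwise Hpw => p q /=.
  by apply: disjointW; apply/subsetP => z; rewrite mem_filter => /andP[].
Qed.

End Contr2.


Section LS.
Variables (T : finType) (f : rel T).
Hypothesis fout : forall x y y', f x y -> f x y' -> y = y'.
Hypothesis fin : forall x x' y, f x y -> f x' y -> x = x'.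

Definition nxt x : option T := [pick y | f x y].

Fixpoint walk n x : seq T :=
  if n is n'.+1 then x :: (if nxt x is Some y then walk n' y else [::]) else [::].

Lemma sorted_nth (w : seq T) a i : sorted f w -> i.+1 < size w ->
  f (nth a w i) (nth a w i.+1).
Proof. case: w => // x q /(pathP a) H Hi; exact: H. Qed.

Lemma walk_sorted n x : sorted f (walk n x).
Proof.
elim: n x => // n IH x /=; rewrite /nxt; case: pickP => [y fxy|] //=.
move: (IH y); case: n {IH} => //= n; case: (nxt y) => [z|] /=; by rewrite fxy.
Qed.

Lemma walk_head n x a : 0 < n -> nth a (walk n x) 0 = x.
Proof. by case: n. Qed.

Lemma walk_last n x : size (walk n x) < n -> forall z, ~~ f (last x (walk n x)) z.
Proof.
elim: n x => // n IH x /=; rewrite /nxt; case: pickP => [y fxy|H] /=; last first.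
  by move=> _ z; rewrite H.
case: n IH => // n IH; rewrite ltnS => hs z.
have := IH y hs z; rewrite /= => //.
Qed.


Lemma idx_src (w w' : seq T) a i j : sorted f w -> sorted f w' ->
  (forall x, ~~ f x (nth a w 0)) -> (forall x, ~~ f x (nth a w' 0)) ->
  i < size w -> j < size w' -> nth a w i = nth a w' j ->
  nth a w 0 = nth a w' 0 /\ i = j.
Proof.
move=> sw sw' n0 n0'.
elim: i j => [|i IH] [|j] hi hj eq //.
- by have := sorted_nth a sw' hj; rewrite -eq => /negP; rewrite (negbTE (n0 _)).
- by have := sorted_nth a sw hi; rewrite eq => /negP; rewrite (negbTE (n0' _)).
- have e1 := sorted_nth a sw hi; have e2 := sorted_nth a sw' hj.
  rewrite eq in e1; have := fin e1 e2 => eq'.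
  have [-> ->] := IH j (ltnW hi) (ltnW hj) eq'; by [].
Qed.


Lemma walk_ne n x : 0 < n -> walk n x = x :: behead (walk n x).
Proof. by case: n. Qed.

Lemma walk_src_uniq n s : (forall x, ~~ f x s) -> uniq (walk n s).
Proof.
move=> ns; case: n => [//|n]; apply/(uniqP s) => i j hi hj eq.
have := @idx_src (walk n.+1 s) (walk n.+1 s) s i j (walk_sorted _ _) (walk_sorted _ _).
by rewrite walk_head // => /(_ ns ns hi hj eq) [].
Qed.

Lemma LS (V : {set T}) e k (S Tt : {set T}) (ss : seq T) :
  (forall x y, f x y -> [&& e x y, x \in V & y \in V]) ->
  size ss = k -> uniq ss -> {subset ss <= S} ->
  (forall s, s \in ss -> (forall x, ~~ f x s) /\ exists y, f s y) ->
  (forall x y, x \notin Tt -> f y x -> exists z, f x z) ->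
  routable V e k S Tt.
Proof.
move=> fe hsz hu hS hsrc hbal.
set N := #|T|.+1.
have wsz s : s \in ss -> size (walk N s) < N.
  move=> hs; rewrite ltnS -(card_uniqP (walk_src_uniq N (proj1 (hsrc s hs)))).
  exact: max_card.
have w2 s : s \in ss -> 1 < size (walk N s).
  move=> hs; have [_ [y fy]] := hsrc s hs; rewrite /N /= /nxt.
  case: pickP => [z _|/(_ y)]; last by rewrite fy.
  have : 0 < #|T| by apply/card_gt0P; exists y.
  by case: #|T|.
exists (map (walk N) ss); split.
- by rewrite size_map.
- move=> p /mapP [s hs ->]; have [ns _] := hsrc s hs.
  have sw := walk_sorted N s; have uw := walk_src_uniq N ns.
  have w2s := w2 s hs.
  have hh : nth s (walk N s) 0 = s := walk_head _ _ (ltn0Sn _).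
  have hl := walk_last (wsz s hs).
  move: (walk N s) sw uw w2s hh hl => w sw uw w2s hh hl.
  case: w sw uw w2s hh hl => // s0 q sw uw w2s hh hl; move: hh => /= hh; subst s0.
  split.
  + rewrite /gpath; apply/and3P; split => //.
    * by move: sw => /=; apply: sub_path => a b /fe /andP[].
    * change (all (fun z => z \in V) (s :: q)); apply/(all_nthP s) => i hi.
      case: i hi => [|i] hi.
        by have := sorted_nth s sw w2s => /fe /and3P[].
      by have := sorted_nth s sw hi => /fe /and3P[].
  + by exists s => //; exact: hS.
  + exists (last s q) => //.
    case: (boolP (last s q \in Tt)) => // hT.
    have [i hi] : exists i, size (s :: q) = i.+2.
      by move: w2s; case: (size _) => [|[|i]] //; exists i.
    have fl := sorted_nth s sw (i := i); rewrite hi ltnSn in fl.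
    have hl' : nth s (s :: q) i.+1 = last s q by rewrite -[last s q]/(last s (s :: q)) -nth_last hi.
    rewrite hl' in fl; have [z fz] := hbal _ _ hT (fl isT).
    by have := hl z; rewrite fz.
- rewrite pairwise_map; case: ss hu hsrc {hsz hS wsz w2} => [//|s ss'] hu hsrc.
  apply/(pairwiseP s) => i j hi hj ij /=.
  rewrite disjoint_has; apply/hasPn => z zi; apply/negP => zj.
  have [a ai ea] := nthP s zi; have [b bj eb] := nthP s zj.
  have ha := mem_nth s hi; have hb := mem_nth s hj.
  have := idx_src (w := walk N (nth s (s :: ss') i)) (w' := walk N (nth s (s :: ss') j)) (a := s) (i := a) (j := b) (walk_sorted _ _) (walk_sorted _ _).
  rewrite !walk_head // => /(_ (proj1 (hsrc _ ha)) (proj1 (hsrc _ hb)) ai bj).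
  rewrite ea eb => /(_ erefl) [/eqP]; rewrite nth_uniq // => /eqP ij'.
  by rewrite ij' ltnn in ij.
Qed.

End LS.


Section Reroute.
Variables (T : finType) (V : {set T}) (e : rel T) (k : nat)
  (SP TP SQ TQ : {set T}) (P Q : seq (seq T)).
Hypothesis hP : linkage V e k SP TP P.
Hypothesis hQ : linkage V e k SQ TQ Q.
Hypothesis hSTP : [disjoint SP & TP].
Hypothesis esym : forall x y, e x y = e y x.
Hypothesis hdeg : forall x, x \in SP :|: TP -> forall y z, e x y -> e x z -> y = z.
Hypothesis hnd : forall u v,
  ~~ ((path_edge P u v || path_edge P v u) && (path_edge Q u v || path_edge Q v u)).

Variables (a0 : T) (ys : seq T) (col : nat -> bool).
Let r := size ys.
Hypothesis hu : uniq ys.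
Hypothesis hr : 3 <= r.
Hypothesis col0 : col 0 = true.
Hypothesis colS : forall t, t.+1 < r -> col t.+1 = ~~ col t.
Let y t := nth a0 ys t.
Let nx t := if t.+1 == r then 0 else t.+1.
Let pv t := if t is t'.+1 then t' else r.-1.
Hypothesis hE : forall t, t < r ->
  (if col t then path_edge P else path_edge Q) (y t) (y (nx t)).

Lemma nx_lt t : t < r -> nx t < r.
Proof. rewrite /nx; case: ifP => /eqP; lia. Qed.
Lemma pv_lt t : t < r -> pv t < r.
Proof. rewrite /pv; case: t => /=; lia. Qed.
Lemma nx_pv t : t < r -> nx (pv t) = t.
Proof. rewrite /nx /pv; case: t => [|t] /=; case: ifP => /eqP; lia. Qed.
Lemma pv_nx t : t < r -> pv (nx t) = t.
Proof. rewrite /nx /pv; case: ifP => /eqP; lia. Qed.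
Lemma nx_ne_pv t : t < r -> nx t <> pv t.
Proof. rewrite /nx /pv; case: ifP => /eqP; case: t => [|t] /=; lia. Qed.

Lemma col_pv t : t < r -> col (pv t) = false -> col t = true.
Proof.
case: t => [|t] ht /=; first by rewrite col0.
by rewrite colS // => ->.
Qed.

Lemma y_inj t t' : t < r -> t' < r -> y t = y t' -> t = t'.
Proof. by move=> h h' /eqP; rewrite /y nth_uniq // => /eqP. Qed.

Definition cycP a b := has (fun t => [&& col t, y t == a & y (nx t) == b]) (iota 0 r).
Definition cycQ a b := has (fun t => [&& ~~ col t, y t == a & y (nx t) == b]) (iota 0 r).

Lemma cycP_inv a b : cycP a b -> exists2 t, t < r & [/\ col t, a = y t & b = y (nx t)].
Proof.
by move/hasP => [t]; rewrite mem_iota add0n => /andP[_ ht] /and3P[c /eqP <- /eqP <-];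
  exists t.
Qed.
Lemma cycQ_inv a b : cycQ a b -> exists2 t, t < r & [/\ col t = false, a = y t & b = y (nx t)].
Proof.
move/hasP => [t]; rewrite mem_iota add0n => /andP[_ ht] /and3P[c /eqP <- /eqP <-].
by exists t => //; rewrite (negbTE c).
Qed.
Lemma cycP_intro t : t < r -> col t -> cycP (y t) (y (nx t)).
Proof. by move=> ht c; apply/hasP; exists t; rewrite ?mem_iota ?c ?eqxx. Qed.
Lemma cycQ_intro t : t < r -> col t = false -> cycQ (y t) (y (nx t)).
Proof. by move=> ht c; apply/hasP; exists t; rewrite ?mem_iota ?c ?eqxx. Qed.

Lemma cyc_adj t : t < r -> e (y t) (y (nx t)).
Proof.
move=> ht; have := hE ht; case: (col t).
  by case/(F_edge hP)/and3P.
by case/(F_edge hQ)/and3P.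
Qed.

Lemma nonterm t : t < r -> y t \notin SP :|: TP.
Proof.
move=> ht; apply/negP => hT.
have e1 := cyc_adj ht.
have e2 := cyc_adj (pv_lt ht); rewrite nx_pv // esym in e2.
have := hdeg hT e1 e2 => /y_inj; move/(_ (nx_lt ht) (pv_lt ht)).
exact: nx_ne_pv.
Qed.


Lemma hE_P t : t < r -> col t -> path_edge P (y t) (y (nx t)).
Proof. by move=> ht c; have := hE ht; rewrite c. Qed.
Lemma hE_Q t : t < r -> col t = false -> path_edge Q (y t) (y (nx t)).
Proof. by move=> ht c; have := hE ht; rewrite c. Qed.

Definition fr a b := (path_edge P a b && ~~ cycP a b) || (path_edge Q b a && cycQ b a).

Lemma claim_out a b c : path_edge P a b -> ~~ cycP a b -> path_edge Q c a -> cycQ c a -> False.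
Proof.
move=> pab ncy _ /cycQ_inv [s hs [cs ec ea]].
have ht := nx_lt hs.
have ct : col (nx s) by apply: col_pv => //; rewrite pv_nx.
have := hE_P ht ct; rewrite -ea => /(F_out hP pab) eb.
by move/negP: ncy; apply; rewrite ea eb; apply: cycP_intro.
Qed.

Lemma claim_in a b c : path_edge P a b -> ~~ cycP a b -> path_edge Q b c -> cycQ b c -> False.
Proof.
move=> pab ncy _ /cycQ_inv [s hs [cs eb ec]].
have hp := pv_lt hs.
have cp : col (pv s) by case h: (col (pv s)) => //; rewrite (col_pv hs h) in cs.
have := hE_P hp cp; rewrite nx_pv // -eb => /(F_in hP pab) ea.
by move/negP: ncy; apply; rewrite ea eb -{2}(nx_pv hs); apply: cycP_intro.
Qed.

Lemma fr_in a a' b : fr a b -> fr a' b -> a = a'.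
Proof.
move=> H1 H2; case/orP: H1 => /andP[h1 h2]; case/orP: H2 => /andP[h3 h4].
- exact: (@F_in _ _ _ _ _ _ _ hP _ _ _ h1 h3).
- by case: (claim_in h1 h2 h3 h4).
- by case: (claim_in h3 h4 h1 h2).
- exact: (@F_out _ _ _ _ _ _ _ hQ _ _ _ h1 h3).
Qed.

Lemma on_cyc x : x \in ys -> exists2 t, t < r & x = y t.
Proof. by move=> xs; exists (index x ys); rewrite ?index_mem // /y nth_index. Qed.

Lemma cycP_nonterm a b : cycP a b -> a \notin SP :|: TP.
Proof. by case/cycP_inv => t ht [_ -> _]; apply: nonterm. Qed.
Lemma cycQ_nonterm a b : cycQ a b -> a \notin SP :|: TP.
Proof. by case/cycQ_inv => t ht [_ -> _]; apply: nonterm. Qed.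

Lemma reroute : routable V (del_edge e (y 0) (y 1)) k SP TP.
Proof.
have nx0 : nx 0 = 1 by rewrite /nx; case: ifP => /eqP; lia.
have r0 : 0 < r by lia.
have E0 : path_edge P (y 0) (y 1) by rewrite -nx0; apply: hE_P.
apply: (@LS _ fr fr_in V _ k SP TP (map (head a0) P)).
- move=> x z H; rewrite /del_edge; case/orP: H => /andP[h1 h2].
  + have /and3P[-> -> ->] := F_edge hP h1; rewrite /= !andbT.
    apply/negP => /orP[] /andP[/eqP ex /eqP ez]; subst x z.
    * by move/negP: h2; apply; rewrite -nx0; apply: cycP_intro.
    * exact: (@F_2cyc _ _ _ _ _ _ _ hP _ _ h1 E0).
  + have /and3P[ezx -> ->] := F_edge hQ h1; rewrite esym ezx /= !andbT.
    apply/negP => /orP[] /andP[/eqP ex /eqP ez]; subst x z.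
    * by move/negP: (hnd (y 0) (y 1)); apply; rewrite E0 h1 orbT.
    * by move/negP: (hnd (y 0) (y 1)); apply; rewrite E0 h1.
- by rewrite size_map; case: hP.
- exact: F_heads hP a0.
- by move=> z /mapP [p hp ->]; apply: L_head hP p a0 hp.
- move=> z /mapP [p hp ->]; split.
  + move=> x; apply/negP => /orP[] /andP[h1 h2].
      exact: (@F_src _ _ _ _ _ _ _ hP p x a0 hp h1).
    have := cycQ_nonterm h2; rewrite inE (L_head hP a0 hp) //.
  + have [z0 hz] := F_srcout hP hSTP a0 hp; exists z0; rewrite /fr hz /=.
    apply/orP; left; apply/negP => /cycP_nonterm; rewrite inE (L_head hP a0 hp) //.
- move=> x w hx /orP[] /andP[h1 h2].
  + case: (boolP (x \in ys)) => xs.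
      have [t ht ext] := on_cyc xs.
      case ct: (col (pv t)).
        have := hE_P (pv_lt ht) ct; rewrite nx_pv // -ext => /(F_in hP h1) ew.
        by move/negP: h2; case; rewrite ew ext -{2}(nx_pv ht); apply: cycP_intro => //;
          apply: pv_lt.
      exists (y (pv t)); apply/orP; right.
      have := hE_Q (pv_lt ht) ct; rewrite nx_pv // -ext => ->.
      by rewrite ext -{2}(nx_pv ht); apply: cycQ_intro => //; apply: pv_lt.
    have [z hz] := F_cont hP h1 hx; exists z; apply/orP; left; rewrite hz /=.
    apply/negP => /cycP_inv [t ht [_ ex _]]; move/negP: xs; apply.
    by rewrite ex mem_nth.
  + have [s hs [cs ex ew]] := cycQ_inv h2.
    have hp := pv_lt hs.
    have cp : col (pv s) by case h: (col (pv s)) => //; rewrite (col_pv hs h) in cs.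
    have := hE_P hp cp; rewrite nx_pv // -ex => hpx.
    have [z hz] := F_cont hP hpx hx; exists z; apply/orP; left; rewrite hz /=.
    apply/negP => /cycP_inv [t ht [ct ex' _]].
    by rewrite ex in ex'; rewrite (y_inj hs ht ex') ct in cs.
Qed.

End Reroute.


Section Cyc.
Variable T : finType.

Lemma chain_cycle (R B : seq (seq T)) c x xs : chain R B c x xs -> ~~ uniq (x :: xs) ->
  exists ys d, [/\ uniq ys, 0 < size ys &
    forall t, t < size ys -> col_edge R B (d (+) odd t) (nth x ys t)
       (nth x ys (if t.+1 == size ys then 0 else t.+1))].
Proof.
move=> hc /(uniqPn x) [i0 [j0 [ij0 js0 eq0]]].
set w := x :: xs in js0 eq0 *.
pose Pj j := (j < size w) && (nth x w j \in take j w).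
have exP : exists j, Pj j.
  exists j0; rewrite /Pj js0 /= -eq0; apply/(nthP x); exists i0.
    by rewrite size_takel // ltnW.
  by rewrite nth_take.
case: (ex_minnP exP) => j /andP[jw jin] jmin.
have utj : uniq (take j w).
  apply/negPn/negP => /(uniqPn x) [i' [j' [ij' js' eq']]].
  have sj : size (take j w) = j by rewrite size_takel // ltnW.
  rewrite sj in js'.
  have := jmin j'; rewrite /Pj (ltn_trans js' jw) /=.
  rewrite -(nth_take x js') -eq' (nth_take x (ltn_trans ij' js')).
  have -> : nth x w i' \in take j' w.
    by rewrite -(nth_take x ij'); apply: mem_nth; rewrite size_takel // ltnW // (ltn_trans js' jw).
  by move/(_ isT); rewrite leqNgt js'.
set i := index (nth x w j) (take j w).
have sj : size (take j w) = j by rewrite size_takel // ltnW.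
have ij : i < j by move: (jin); rewrite -index_mem sj.
have ei : nth x w i = nth x w j by rewrite -(nth_take x ij) nth_index.
exists (drop i (take j w)), (c (+) odd i).
have sz : size (drop i (take j w)) = j - i by rewrite size_drop size_takel // ltnW.
have ny t : t < j - i -> nth x (drop i (take j w)) t = nth x w (i + t).
  by move=> ht; rewrite nth_drop nth_take //; lia.
split.
- exact: drop_uniq.
- by rewrite sz; lia.
- move=> t; rewrite sz => ht.
  have hxs : i + t < size xs.
    have hw : size w = (size xs).+1 by [].
    have h1 : i + t < j by move: ht ij; clearbody i; clear; lia.
    by move: h1 jw; rewrite hw; clearbody i; clear; lia.
  have E := hc _ hxs.
  have e1 := ny t ht.
  have e2 : nth x (drop i (take j w)) (if t.+1 == j - i then 0 else t.+1) = nth x xs (i + t).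
    case: ifP => /eqP ht'.
      have hj : j = (i + t).+1 by move: ht' ij; clearbody i; clear; lia.
      rewrite ny; last by move: ij; clearbody i; clear; lia.
      by rewrite addn0 ei hj.
    rewrite ny; last by move: ht ht'; clearbody i; clear; lia.
    by rewrite addnS.
  by rewrite e1 e2; move: E; rewrite oddD addbA.
Qed.

End Cyc.


Section Core.
Variable T : finType.

Lemma L_del (V : {set T}) e k (S Tt : {set T}) Q u v :
  linkage V e k S Tt Q ->
  (forall a b, path_edge Q a b -> ~~ ((a == u) && (b == v) || (a == v) && (b == u))) ->
  linkage V (del_edge e u v) k S Tt Q.
Proof.
move=> hL hn; case: (hL) => hs hp hpw; split => // p Hp.
have [g h1 h2] := hp p Hp; split => //.
case: p Hp g {h1 h2} => // a q Hp /and3P[pq uq aq]; apply/and3P; split => //.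
apply/(pathP a) => i hi; rewrite /del_edge.
have := (pathP a pq) i hi => ->; rewrite /=.
exact: (hn _ _ (nth_pe a Hp hi)).
Qed.

Lemma core (V : {set T}) e k (SP TP SQ TQ : {set T}) P Q
  (hP : linkage V e k SP TP P) (hQ : linkage V e k SQ TQ Q)
  (hSTP : [disjoint SP & TP])
  (esym : forall x y, e x y = e y x) (eirr : forall x, e x x = false)
  (hdeg : forall x, x \in SP :|: TP -> forall y z, e x y -> e x z -> y = z)
  (hnd : forall u v,
    ~~ ((path_edge P u v || path_edge P v u) && (path_edge Q u v || path_edge Q v u)))
  (hmin : forall u v, u \in V -> v \in V -> e u v ->
    ~ (routable V (del_edge e u v) k SP TP /\ routable V (del_edge e u v) k SQ TQ))
  (a0 : T) (ys : seq T) (col : nat -> bool) :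
  uniq ys -> 0 < size ys -> col 0 = true ->
  (forall t, t.+1 < size ys -> col t.+1 = ~~ col t) ->
  (forall t, t < size ys ->
    (if col t then path_edge P else path_edge Q) (nth a0 ys t)
       (nth a0 ys (if t.+1 == size ys then 0 else t.+1))) ->
  False.
Proof.
move=> hu hr c0 cS hE.
have E0 := hE 0 hr; rewrite c0 in E0.
case: (ltnP 2 (size ys)) => hr3; last first.
  have : size ys = 1 \/ size ys = 2 by move: hr hr3; clear; lia.
  case=> [s1|s2].
  - move: E0; rewrite s1 /= => /(F_edge hP) /and3P[].
    by rewrite eirr.
  - move: E0; rewrite s2 /= => E0.
    have c1 : col 1 = false by rewrite cS ?c0 // s2.
    have E1 := hE 1; rewrite s2 c1 /= in E1; have {}E1 := E1 isT.
    by move/negP: (hnd (nth a0 ys 0) (nth a0 ys 1)); apply; rewrite E0 E1 orbT.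
have R1 := reroute hP hQ hSTP esym hdeg hnd hu hr3 c0 cS hE.
have nx0 : (if 1 == size ys then 0 else 1) = 1 by case: ifP => /eqP; lia.
rewrite nx0 in E0.
have /and3P[e01 v0 v1] := F_edge hP E0.
apply: (hmin _ _ v0 v1 e01); split => //.
exists Q; apply: L_del => // a b hab; apply/negP => /orP[] /andP[/eqP ea /eqP eb]; subst a b.
- by move/negP: (hnd (nth a0 ys 0) (nth a0 ys 1)); apply; rewrite E0 hab.
- by move/negP: (hnd (nth a0 ys 0) (nth a0 ys 1)); apply; rewrite E0 hab !orbT.
Qed.

End Core.


Lemma pe_memL (T : finType) (P : seq (seq T)) a b :
  path_edge P a b -> exists2 p, p \in P & a \in p.
Proof.
move=> h; have [p hp [i [hi ha hb]]] := pe_nth a h.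
by exists p => //; rewrite -ha mem_nth // ltnW.
Qed.
Lemma pe_memR (T : finType) (P : seq (seq T)) a b :
  path_edge P a b -> exists2 p, p \in P & b \in p.
Proof.
move=> h; have [p hp [i [hi ha hb]]] := pe_nth a h.
by exists p => //; rewrite -hb mem_nth.
Qed.

Theorem claim2p4 (TG : finType) (eG : rel TG) (k : nat)
    (S1 T1 S2 T2 : {set TG})
    (VH : {set TG}) (eH : rel TG) (phi : TG -> {set TG})
    (R B : seq (seq TG)) :
  sym_irrefl eG ->
  #|S1| = k -> #|T1| = k -> #|S2| = k -> #|T2| = k ->
  [disjoint S1 & T1] -> [disjoint S1 & S2] -> [disjoint S1 & T2] ->
  [disjoint T1 & S2] -> [disjoint T1 & T2] -> [disjoint S2 & T2] ->
  (forall x, x \in S1 :|: T1 :|: S2 :|: T2 -> degree [set: TG] eG x = 1) ->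
  routable [set: TG] eG k S1 T1 -> routable [set: TG] eG k S2 T2 ->
  (* H = (VH, eH) is a minor of G containing the terminals as vertices,
     each with singleton branch set *)
  sym_irrefl eH ->
  (forall x y, eH x y -> (x \in VH) && (y \in VH)) ->
  minor_model eG VH eH phi ->
  (forall x, x \in S1 :|: T1 :|: S2 :|: T2 -> x \in VH /\ phi x = [set x]) ->
  routable VH eH k S1 T1 -> routable VH eH k S2 T2 ->
  (* minimality: deleting or contracting any edge destroys a property *)
  (forall u v, u \in VH -> v \in VH -> eH u v ->
     ~ (routable VH (del_edge eH u v) k S1 T1 /\
        routable VH (del_edge eH u v) k S2 T2)) ->
  (forall u v, u \in VH -> v \in VH -> eH u v ->
     u \in S1 :|: T1 :|: S2 :|: T2 \/ v \in S1 :|: T1 :|: S2 :|: T2 \/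
     ~ (routable (VH :\ v) (contr_edge eH u v) k S1 T1 /\
        routable (VH :\ v) (contr_edge eH u v) k S2 T2)) ->
  linkage VH eH k S1 T1 R -> linkage VH eH k S2 T2 B ->
  forall (c : bool) (x : TG) (xs : seq TG),
    chain R B c x xs -> uniq (x :: xs).
Proof.
move=> _ _ _ _ _ d11 d12 d13 d21 d22 d23 hdegG _ _ [esym eirr] hVH hmm hsing _ _
  hdel hcon hR hB c x xs hc.
case U: (uniq (x :: xs)) => //.
have nu : ~~ uniq (x :: xs) by rewrite U.
have [ys [d [uy sy hy]]] := chain_cycle hc nu.
exfalso.
have Hdeg : forall z, z \in S1 :|: T1 :|: S2 :|: T2 -> forall a b, eH z a -> eH z b -> a = b.
  move=> z hz a b ea eb.
  have [zV phz] := hsing z hz.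
  case: hmm => _ _ hdisj hedge.
  have /andP[_ aV] := hVH _ _ ea; have /andP[_ bV] := hVH _ _ eb.
  have [a1 [a2 [a1z a2a ea']]] := hedge z a zV aV ea.
  have [b1 [b2 [b1z b2b eb']]] := hedge z b zV bV eb.
  rewrite phz in_set1 in a1z; rewrite phz in_set1 in b1z.
  have ea2 : eG z a2 by rewrite -(eqP a1z).
  have eb2 : eG z b2 by rewrite -(eqP b1z).
  have hd1 : #|[set w in [set: TG] | eG z w]| == 1 by apply/eqP; exact: (hdegG z hz).
  have [w0 hw0] := cards1P hd1.
  have ha2 : a2 \in [set w in [set: TG] | eG z w] by rewrite !inE ea2.
  have hb2 : b2 \in [set w in [set: TG] | eG z w] by rewrite !inE eb2.
  rewrite hw0 in_set1 in ha2; rewrite hw0 in_set1 in hb2.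
  move/eqP: ha2 a2a => ->; move/eqP: hb2 b2b => -> hb hab.
  case: (eqVneq a b) => // nab.
  by have := disjointFr (hdisj a b aV bV nab) hab; rewrite hb.
have sep : forall z, z \in S1 :|: T1 -> z \in S2 :|: T2 -> False.
  move=> z; rewrite !inE => /orP[] h1 /orP[] h2.
  - by have := disjointFr d12 h1; rewrite h2.
  - by have := disjointFr d13 h1; rewrite h2.
  - by have := disjointFr d21 h1; rewrite h2.
  - by have := disjointFr d22 h1; rewrite h2.
have hnd : forall u v, ~~ ((path_edge R u v || path_edge R v u) &&
                          (path_edge B u v || path_edge B v u)).
  move=> u v; apply/negP => /andP[hr hb].
  have nt : forall z, (exists2 p, p \in R & z \in p) -> (exists2 p, p \in B & z \in p) ->
      z \notin S1 :|: T1 :|: S2 :|: T2.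
    move=> z [p hp zp] [q hq zq]; apply/negP => zt.
    apply: (sep z).
      exact: (L_term hR esym hp zp (Hdeg z zt)).
    exact: (L_term hB esym hq zq (Hdeg z zt)).
  have nu' : u \notin S1 :|: T1 :|: S2 :|: T2.
    apply: nt.
      by case/orP: hr => h; [exact: pe_memL h | exact: pe_memR h].
    by case/orP: hb => h; [exact: pe_memL h | exact: pe_memR h].
  have nv : v \notin S1 :|: T1 :|: S2 :|: T2.
    apply: nt.
      by case/orP: hr => h; [exact: pe_memR h | exact: pe_memL h].
    by case/orP: hb => h; [exact: pe_memR h | exact: pe_memL h].
  have [euv uV vV] : [/\ eH u v, u \in VH & v \in VH].
    case/orP: hr => /(F_edge hR) /and3P[h1 h2 h3]; split => //.
    by rewrite esym.
  case: (hcon u v uV vV euv) => [ut|[vt|H]].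
  - by rewrite ut in nu'.
  - by rewrite vt in nv.
  apply: H; move: nv; rewrite !inE !negb_or => /andP[/andP[/andP[nS1 nT1] nS2] nT2].
  split.
    by exists (map (filter (predC1 v)) R); apply: L_contr.
  by exists (map (filter (predC1 v)) B); apply: L_contr.
have sub1 : forall z, z \in S1 :|: T1 -> z \in S1 :|: T1 :|: S2 :|: T2.
  by move=> z; rewrite !inE => ->.
have sub2 : forall z, z \in S2 :|: T2 -> z \in S1 :|: T1 :|: S2 :|: T2.
  by move=> z; rewrite !inE => /orP[] ->; rewrite ?orbT.
case: d hy => hy.
- have cS' : forall t, t.+1 < size ys -> true (+) odd t.+1 = ~~ (true (+) odd t).
    by move=> t _; rewrite /= ?oddS; case: (odd t).
  have hE' : forall t, t < size ys ->
      (if true (+) odd t then path_edge R else path_edge B) (nth x ys t)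
        (nth x ys (if t.+1 == size ys then 0 else t.+1)).
    by move=> t ht; move: (hy t ht); rewrite /col_edge; case: (odd t).
  exact: (@core _ _ _ _ _ _ _ _ _ _ hR hB d11 esym eirr (fun z hz => Hdeg z (sub1 z hz)) hnd hdel
     x ys (fun t => true (+) odd t) uy sy erefl cS' hE').
- have cS' : forall t, t.+1 < size ys -> ~~ (false (+) odd t.+1) = ~~ ~~ (false (+) odd t).
    by move=> t _; rewrite /= ?oddS; case: (odd t).
  have hE' : forall t, t < size ys ->
      (if ~~ (false (+) odd t) then path_edge B else path_edge R) (nth x ys t)
        (nth x ys (if t.+1 == size ys then 0 else t.+1)).
    by move=> t ht; move: (hy t ht); rewrite /col_edge; case: (odd t).
  have hnd' : forall u v, ~~ ((path_edge B u v || path_edge B v u) &&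
                          (path_edge R u v || path_edge R v u)).
    by move=> u v; rewrite andbC; apply: hnd.
  have hdel' : forall u v, u \in VH -> v \in VH -> eH u v ->
     ~ (routable VH (del_edge eH u v) k S2 T2 /\ routable VH (del_edge eH u v) k S1 T1).
    by move=> u v uV vV euv [h1 h2]; apply: (hdel u v uV vV euv).
  exact: (@core _ _ _ _ _ _ _ _ _ _ hB hR d23 esym eirr (fun z hz => Hdeg z (sub2 z hz)) hnd' hdel'
     x ys (fun t => ~~ (false (+) odd t)) uy sy erefl cS' hE').
Qed.
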